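(* Let $I\subseteq\overline{\mathbb R}[x_1^{\pm1},\dots,x_n^{\pm1}]$ be a tropical ideal and $a\in\mathbb R$, and let $\pi:\mathbb R^n\to\mathbb R^{n-1}$ be the projection onto the first $n-1$ coordinates. Then $V(I|_{x_n=a})\subseteq\pi(V(I)\cap\{x_n=a\})$. Moreover, if $\mathbf w\in\mathbb R^n$ with $w_n=a$ lies in a closed cell $\sigma$ of a polyhedral complex $\Sigma$ with $|\Sigma|=V(I)$ such that $\operatorname{span}(\sigma)\not\subseteq\{x_n=0\}$, then $\pi(\mathbf w)\in V(I|_{x_n=a})$. In particular, if $V(I)$ and $\{x_n=a\}$ intersect transversely at $\mathbf w$, then $\pi(\mathbf w)\in V(I|_{x_n=a})$.
   Context: $\overline{\mathbb R}=(\mathbb R\cup\{\infty\},\min,+)$. $[f]_{\mathbf x^{\mathbf u}}$ is the coefficient of $\mathbf x^{\mathbf u}$, $f(\mathbf w)=\min_{\mathbf u}([f]_{\mathbf x^{\mathbf u}}+\mathbf u\cdot\mathbf w)$. Tropical ideal: for $f,g\in I$ and $\mathbf x^{\mathbf u}$ with $[f]_{\mathbf x^{\mathbf u}}=[g]_{\mathbf x^{\mathbf u}}\ne\infty$ there is $h\in I$ with $[h]_{\mathbf x^{\mathbf u}}=\infty$ and $[h]_{\mathbf x^{\mathbf v}}\ge\min([f]_{\mathbf x^{\mathbf v}},[g]_{\mathbf x^{\mathbf v}})$ for all $\mathbf v$, with equality when $[f]_{\mathbf x^{\mathbf v}}\ne[g]_{\mathbf x^{\mathbf v}}$. $I|_{x_n=a}=\{f|_{x_n=a}:f\in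 I\}\subseteq\overline{\mathbb R}[x_1^{\pm1},\dots,x_{n-1}^{\pm1}]$. $V(K)$ is the set of points at which the minimum of every $f\in K$, $f\ne\infty$, is attained at least twice. $\operatorname{span}(\sigma)=\operatorname{span}\{\mathbf x-\mathbf y:\mathbf x,\mathbf y\in\sigma\}$. Two polyhedral complexes intersect transversely at $\mathbf w$ if $\mathbf w$ lies in the relative interiors of cells $\sigma_1,\sigma_2$ of each with $\operatorname{span}(\sigma_1)+\operatorname{span}(\sigma_2)=\mathbb R^n$. *)

(* Defs.v *)
From HB Require Import structures.
From mathcomp Require Import all_boot all_order all_algebra.
From mathcomp Require Import reals.
From Stdlib Require List.
Set Implicit Arguments. Unset Strict Implicit. Unset Printing Implicit Defensive.
Import Order.TTheory GRing.Theory Num.Theory.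
Local Open Scope ring_scope.

Section Tropical.
Variable R : realType.

(* Tropical numbers R ∪ {∞}: [None] is ∞. *)
Definition trop := option R.

Definition tle (x y : trop) : Prop :=
  match y with
  | None => True
  | Some b => match x with Some a' => a' <= b | None => False end
  end.

Definition tmin (x y : trop) : trop :=
  match x, y with
  | None, _ => y
  | _, None => x
  | Some a', Some b => Some (Num.min a' b)
  end.

Definition is_tmin (A : R -> Prop) (m : trop) : Prop :=
  match m with
  | None => forall x, ~ A x
  | Some c => A c /\ forall x, A x -> c <= x
  end.

Definition expo (k : nat) := {ffun 'I_k -> int}.
Definition pt (k : nat) := 'I_k -> R.

Definition dotu k (u : expo k) (w : pt k) : R := \sum_(i < k) (u i)%:~R * w i.
Definition dotr k (c w : pt k) : R := \sum_(i < k) c i * w i.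

(* Tropical Laurent polynomial in k variables: coefficient function
   u |-> [f]_{x^u}; genuine polynomials have finite support. *)
Definition tpoly (k : nat) := expo k -> trop.

Definition finsupp k (f : tpoly k) : Prop :=
  exists s : seq (expo k), forall u, u \notin s -> f u = None.

Definition is_tprod k (h f p : tpoly k) : Prop :=
  forall w : expo k, is_tmin (fun x => exists (u v : expo k) c d,
                       (forall i, u i + v i = w i) /\ h u = Some c /\ f v = Some d
                       /\ x = c + d) (p w).

(* Tropical ideal: an ideal of the semiring of tropical Laurent polynomials
   satisfying the elimination axiom. *)
Definition tropical_ideal k (I : tpoly k -> Prop) : Prop :=
  (forall f, I f -> finsupp f) /\
  I (fun _ => None) /\
  (forall f g, I f -> I g -> I (fun u => tmin (f u) (g u))) /\
  (forall h f p, finsupp h -> I f -> is_tprod h f p -> I p) /\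
  (forall f g (u : expo k), I f -> I g -> f u = g u -> f u <> None ->
     exists h, I h /\ h u = None /\
       forall v, tle (tmin (f v) (g v)) (h v) /\
                 (f v <> g v -> h v = tmin (f v) (g v))).

Definition Vtrop k (K : tpoly k -> Prop) (w : pt k) : Prop :=
  forall f, K f -> (exists u, f u <> None) ->
    exists (u v : expo k) c d, u != v /\ f u = Some c /\ f v = Some d /\
      c + dotu u w = d + dotu v w /\
      forall (z : expo k) e, f z = Some e -> c + dotu u w <= e + dotu z w.

(* The substitution x_n = a (here the last variable, index ord_max of 'I_n.+1). *)
Definition restr_poly n (a : R) (f : tpoly n.+1) (g : tpoly n) : Prop :=
  forall u' : expo n,
    is_tmin (fun x => exists (u : expo n.+1) c, f u = Some c /\
               (forall i : 'I_n, u (widen_ord (leqnSn n) i) = u' i) /\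
               x = c + (u ord_max)%:~R * a) (g u').

Definition restr_ideal n (I : tpoly n.+1 -> Prop) (a : R) (g : tpoly n) : Prop :=
  exists f, I f /\ restr_poly a f g.

Definition proj n (w : pt n.+1) : pt n := fun i => w (widen_ord (leqnSn n) i).

Definition polyhedron k (P : pt k -> Prop) : Prop :=
  exists (m : nat) (A : 'I_m -> pt k) (b : 'I_m -> R),
    forall x, P x <-> forall j, dotr (A j) x <= b j.

Definition face k (F P : pt k -> Prop) : Prop :=
  (exists x, F x) /\
  exists c : pt k, forall x, F x <-> (P x /\ forall y, P y -> dotr c x <= dotr c y).

Definition polyhedral_complex k (S : seq (pt k -> Prop)) : Prop :=
  (forall s, List.In s S -> polyhedron s) /\
  (forall s F, List.In s S -> face F s ->
     exists t, List.In t S /\ forall x, t x <-> F x) /\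
  (forall s t, List.In s S -> List.In t S ->
     (forall x, ~ (s x /\ t x)) \/
     (face (fun x => s x /\ t x) s /\ face (fun x => s x /\ t x) t)).

Definition cx_support k (S : seq (pt k -> Prop)) (x : pt k) : Prop :=
  exists s, List.In s S /\ s x.

Definition dspan k (s : pt k -> Prop) (v : pt k) : Prop :=
  exists l : seq (R * pt k * pt k),
    (forall t, List.In t l -> s t.1.2 /\ s t.2) /\
    forall i, v i = \sum_(t <- l) t.1.1 * (t.1.2 i - t.2 i).

Definition relint k (s : pt k -> Prop) (x : pt k) : Prop :=
  s x /\ exists e : R, 0 < e /\
    forall v, dspan s v -> (forall i, `|v i| < e) -> s (fun i => x i + v i).

Definition transverse k (X Y : pt k -> Prop) (w : pt k) : Prop :=
  exists (S1 S2 : seq (pt k -> Prop)) s1 s2,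
    polyhedral_complex S1 /\ (forall x, cx_support S1 x <-> X x) /\
    polyhedral_complex S2 /\ (forall x, cx_support S2 x <-> Y x) /\
    List.In s1 S1 /\ List.In s2 S2 /\ relint s1 w /\ relint s2 w /\
    forall v, exists v1 v2, dspan s1 v1 /\ dspan s2 v2 /\
                            forall i, v i = v1 i + v2 i.

End Tropical.

(* Main.v *)
Require Import Defs.
From HB Require Import structures.
From mathcomp Require Import all_boot all_order all_algebra.
From mathcomp Require Import reals.
From mathcomp Require Import ring lra.
From Stdlib Require List.
From Stdlib Require Import Classical.
Import Order.TTheory GRing.Theory Num.Theory.
Local Open Scope ring_scope.
Set Implicit Arguments. Unset Strict Implicit.

Definition resu (n : nat) (u : expo n.+1) : expo n :=
  [ffun i => u (widen_ord (leqnSn n) i)].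

Lemma dotu_split (R : realType) n (u : expo n.+1) (u' : expo n) (w : pt R n.+1) :
  (forall i, u (widen_ord (leqnSn n) i) = u' i) ->
  dotu u w = dotu u' (proj w) + (u ord_max)%:~R * w ord_max.
Proof.
move=> H; rewrite /dotu big_ord_recr /=; congr (_ + _).
by apply: eq_bigr => i _; rewrite H.
Qed.

Lemma dotu_lin (R : realType) k (u : expo k) (w d : pt R k) (t : R) :
  dotu u (fun i => w i + t * d i) = dotu u w + t * dotu u d.
Proof.
rewrite /dotu mulr_sumr -big_split /=; apply: eq_bigr => i _; lra.
Qed.

Lemma dotr_lin (R : realType) k (c w d : pt R k) (t : R) :
  dotr c (fun i => w i + t * d i) = dotr c w + t * dotr c d.
Proof.
rewrite /dotr mulr_sumr -big_split /=; apply: eq_bigr => i _; lra.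
Qed.

Lemma dotr_sub (R : realType) k (c x w : pt R k) :
  dotr c (fun i => x i - w i) = dotr c x - dotr c w.
Proof.
rewrite /dotr -sumrB; apply: eq_bigr => i _; lra.
Qed.
Definition tmin_seq (R : realType) (T : Type) (h : T -> trop R) (s : seq T) : trop R :=
  foldr (fun u acc => tmin (h u) acc) None s.

Lemma tmin_seqP (R : realType) (T : eqType) (h : T -> trop R) (s : seq T) :
  is_tmin (fun x => exists u, u \in s /\ h u = Some x) (tmin_seq h s).
Proof.
elim: s => [|y s IH] /=; first by move=> x [u []].
rewrite /tmin_seq /= -/(tmin_seq h s).
case Hy: (h y) => [b|]; case Hs: (tmin_seq h s) IH => [m|] IH /=.
- case: IH => [[u [us hu]] Hm]; split.
  + rewrite /Num.min; case: ifP => _.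
    * by exists y; rewrite inE eqxx.
    * by exists u; rewrite inE us orbT.
  + move=> x [v []]; rewrite inE => /orP [/eqP ->|vs] hv.
    * by rewrite Hy in hv; case: hv => <-; rewrite ge_min lexx.
    * by rewrite ge_min (Hm x) ?orbT //; exists v.
- split; first by exists y; rewrite inE eqxx.
  move=> x [v []]; rewrite inE => /orP [/eqP ->|vs] hv.
  + by rewrite Hy in hv; case: hv => <-.
  + by case: (IH x); exists v.
- case: IH => [[u [us hu]] Hm]; split.
  + by exists u; rewrite inE us orbT.
  + move=> x [v []]; rewrite inE => /orP [/eqP ->|vs] hv.
    * by rewrite Hy in hv.
    * by apply: Hm; exists v.
- move=> x [v []]; rewrite inE => /orP [/eqP ->|vs] hv.
  + by rewrite Hy in hv.
  + by apply: (IH x); exists v.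
Qed.

Lemma pos_lb (R : realType) (T : eqType) (s : seq T) (F : T -> R) :
  exists d : R, 0 < d /\ forall u, u \in s -> 0 < F u -> d <= F u.
Proof.
elim: s => [|y s [d [d0 Hd]]]; first by exists 1; split => //.
case: (ltrP 0 (F y)) => Fy.
- exists (Num.min d (F y)); split; first by rewrite lt_min d0 Fy.
  move=> u; rewrite inE => /orP [/eqP ->|us] Fu; first by rewrite ge_min lexx orbT.
  by rewrite ge_min Hd.
- exists d; split => // u; rewrite inE => /orP [/eqP ->|us] Fu; last exact: Hd.
  by move: Fu; rewrite ltNge Fy.
Qed.

Lemma dspan_const (R : realType) k (s : pt R k -> Prop) (i0 : 'I_k) (a : R) v :
  (forall y, s y -> y i0 = a) -> dspan s v -> v i0 = 0.
Proof.
move=> Hs [l [Hl ->]]; elim: l Hl => [|t l IH] Hl; first by rewrite big_nil.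
rewrite big_cons IH; last by move=> x hx; apply: Hl; right.
have [h1 h2] := Hl t (or_introl erefl).
by rewrite (Hs _ h1) (Hs _ h2) subrr mulr0 addr0.
Qed.

Lemma poly_convex (R : realType) k (s : pt R k -> Prop) (x w : pt R k) (t : R) :
  polyhedron s -> s x -> s w -> 0 <= t <= 1 ->
  s (fun i => w i + t * (x i - w i)).
Proof.
move=> [m [A [b Hs]]] /Hs Hx /Hs Hw /andP [t0 t1].
apply/Hs => j; rewrite (dotr_lin (A j) w (fun i => x i - w i)) dotr_sub.
have := Hx j; have := Hw j; set p := dotr _ x; set q := dotr _ w => h1 h2.
have : t * (p - q) <= t * (b j - q) by rewrite ler_wpM2l // lerB.
have : t * (b j - q) <= b j - q by rewrite ler_piMl // subr_ge0.
lra.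
Qed.

Lemma is_tmin_ext (R : realType) (A B : R -> Prop) m :
  (forall x, A x <-> B x) -> is_tmin A m -> is_tmin B m.
Proof.
case: m => [c|] /= H.
- by move=> [/H hc hm]; split => // x /H; apply: hm.
- by move=> hA x /H; apply: hA.
Qed.

Lemma dotu_ext (R : realType) k (u : expo k) (w w2 : pt R k) :
  (forall i, w i = w2 i) -> dotu u w = dotu u w2.
Proof. by move=> H; apply: eq_bigr => i _; rewrite H. Qed.

Lemma restr_exists (R : realType) n (a : R) (f : tpoly R n.+1) :
  finsupp f -> exists g, restr_poly a f g.
Proof.
move=> [s Hs].
pose h u' (u : expo n.+1) : trop R :=
  if resu u == u' then
    (match f u with Some c => Some (c + (u ord_max)%:~R * a) | None => None end)
  else None.
exists (fun u' => tmin_seq (h u') s) => u'.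
apply: is_tmin_ext (tmin_seqP (h u') s) => x; split.
- move=> [u [us]]; rewrite /h; case: eqP => // <-.
  case fu: (f u) => [c|] // [<-]; exists u, c; split => //; split => // i.
  by rewrite ffunE.
- move=> [u [c [fu [hr ->]]]]; exists u; split.
  + by apply/negPn/negP => /Hs; rewrite fu.
  + rewrite /h fu; have -> : resu u = u' by apply/ffunP => i; rewrite ffunE hr.
    by rewrite eqxx.
Qed.

Definition extw (R : realType) n (w' : pt R n) (a : R) : pt R n.+1 :=
  fun i => if (insub (val i) : option 'I_n) is Some j then w' j else a.

Lemma extw_max (R : realType) n (w' : pt R n) a : extw w' a ord_max = a.
Proof.
rewrite /extw; case: insubP => // j _ /= hj.
by have := ltn_ord j; rewrite hj ltnn.
Qed.

Lemma extw_proj (R : realType) n (w' : pt R n) a i : proj (extw w' a) i = w' i.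
Proof.
rewrite /proj /extw; case: insubP => [j _ /= hj|].
- by congr w'; apply: val_inj.
- by rewrite /= ltn_ord.
Qed.

Lemma part1 (R : realType) (n : nat) (I : tpoly R n.+1 -> Prop) (a : R) :
  (forall f, I f -> finsupp f) ->
  (forall w' : pt R n, Vtrop (restr_ideal I a) w' ->
     exists w : pt R n.+1, Vtrop I w /\ w ord_max = a /\ forall i, proj w i = w' i).
Proof.
move=> Hfs w' HV; exists (extw w' a); split; last by split; [apply: extw_max|apply: extw_proj].
set w := extw w' a.
have wa : w ord_max = a by apply: extw_max.
have dw : forall (u : expo n.+1) (u' : expo n), (forall i, u (widen_ord (leqnSn n) i) = u' i) ->
    dotu u w = dotu u' w' + (u ord_max)%:~R * a.
  move=> u u' hu; rewrite (dotu_split _ hu) wa; congr (_ + _).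
  by apply: dotu_ext => i; apply: extw_proj.
move=> f If [u0 hu0].
have [g Hg] := restr_exists a (Hfs f If).
have gnz : exists u, g u <> None.
  exists (resu u0); have := Hg (resu u0).
  case fu0 : (f u0) hu0 => [c0|] // _.
  case: (g (resu u0)) => // H; exfalso; apply: (H (c0 + (u0 ord_max)%:~R * a)).
  by exists u0, c0; split => //; split => // i; rewrite ffunE.
have [u1' [u2' [c1 [c2 [neq [g1 [g2 [eq12 hmin]]]]]]]] := HV g (ex_intro _ f (conj If Hg)) gnz.
have := Hg u1'; rewrite g1 => -[[u1 [d1 [f1 [r1 e1]]]] _].
have := Hg u2'; rewrite g2 => -[[u2 [d2 [f2 [r2 e2]]]] _].
exists u1, u2, d1, d2; split.
  apply/eqP => E; move/eqP: neq; apply; apply/ffunP => i.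
  by rewrite -r1 -r2 E.
split => //; split => //; split.
  rewrite (dw _ _ r1) (dw _ _ r2); move: eq12; rewrite e1 e2; lra.
move=> z e fz.
have := Hg (resu z).
have Az : forall i, z (widen_ord (leqnSn n) i) = resu z i by move=> i; rewrite ffunE.
case gz: (g (resu z)) => [m|] /=.
- move=> [_ Hm]; have := Hm (e + (z ord_max)%:~R * a) (ex_intro _ z (ex_intro _ e (conj fz (conj Az erefl)))).
  have := hmin _ _ gz.
  rewrite (dw _ _ r1) (dw _ _ Az); move: e1; lra.
- by move=> H; exfalso; apply: (H (e + (z ord_max)%:~R * a)); exists z, e.
Qed.

Lemma le_sum_seq (R : realType) (T : eqType) (s : seq T) (F : T -> R) u :
  (forall v, 0 <= F v) -> u \in s -> F u <= \sum_(v <- s) F v.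
Proof.
move=> F0; elim: s => [|y s IH] //; rewrite big_cons inE => /orP [/eqP ->|us].
- by rewrite lerDl sumr_ge0.
- by apply: le_trans (IH us) _; rewrite lerDr.
Qed.

Lemma part2 (R : realType) (n : nat) (I : tpoly R n.+1 -> Prop) (a : R) :
  (forall f, I f -> finsupp f) ->
  (forall (S : seq (pt R n.+1 -> Prop)) (s : pt R n.+1 -> Prop) (w : pt R n.+1),
     polyhedral_complex S -> (forall x, cx_support S x <-> Vtrop I x) ->
     List.In s S -> s w -> w ord_max = a ->
     ~ (forall v, dspan s v -> v ord_max = 0) ->
     Vtrop (restr_ideal I a) (proj w)).
Proof.
move=> Hfs S s w [Hpoly _] HS sS sw wa Hsp.
have VI : forall y, s y -> Vtrop I y by move=> y sy; apply/HS; exists s.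
have [x [sx xn]] : exists x, s x /\ x ord_max <> w ord_max.
  apply: NNPP => H; apply: Hsp => v; apply: (dspan_const (a := w ord_max)) => y sy.
  by apply: NNPP => H2; apply: H; exists y.
pose d := fun i => x i - w i.
have dn : d ord_max != 0 by rewrite /d subr_eq0; apply/eqP.
have dw : forall (u : expo n.+1) (u' : expo n), (forall i, u (widen_ord (leqnSn n) i) = u' i) ->
    dotu u w = dotu u' (proj w) + (u ord_max)%:~R * a.
  by move=> u u' hu; rewrite (dotu_split _ hu) wa.
move=> g [f [If Hg]] [u'0 hu'0].
have fnz : exists u, f u <> None.
  have := Hg u'0; case: (g u'0) hu'0 => // e _ [[u [c [fu _]]] _].
  by exists u; rewrite fu.
have [u0 [v0 [c0 [e0 [_ [fu0 [_ [_ hmin0]]]]]]]] := VI w sw f If fnz.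
set M := c0 + dotu u0 w.
pose T u := exists c, f u = Some c /\ c + dotu u w = M.
have gval : forall u1, T u1 -> exists e1, g (resu u1) = Some e1 /\
                         e1 + dotu (resu u1) (proj w) = M.
  move=> u1 [c1 [f1 T1]].
  have Az : forall i, u1 (widen_ord (leqnSn n) i) = resu u1 i by move=> i; rewrite ffunE.
  have := Hg (resu u1); case: (g (resu u1)) => [m|] /=.
  - move=> [[u [c [fu [r ->]]]] Hm]; exists (c + (u ord_max)%:~R * a); split => //.
    have := Hm (c1 + (u1 ord_max)%:~R * a) (ex_intro _ u1 (ex_intro _ c1 (conj f1 (conj Az erefl)))).
    have := hmin0 _ _ fu; move: T1; rewrite /M (dw _ _ r) (dw _ _ Az); lra.
  - by move=> H; exfalso; apply: (H (c1 + (u1 ord_max)%:~R * a)); exists u1, c1.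
case: (classic (exists u1 u2, T u1 /\ T u2 /\
          exists i, u1 (widen_ord (leqnSn n) i) <> u2 (widen_ord (leqnSn n) i))).
  move=> [u1 [u2 [T1 [T2 [i ne]]]]].
  have [e1 [g1 h1]] := gval u1 T1; have [e2 [g2 h2]] := gval u2 T2.
  exists (resu u1), (resu u2), e1, e2; split.
    by apply/eqP => E; apply: ne; move/ffunP: E => /(_ i); rewrite !ffunE.
  split => //; split => //; split; first by rewrite h1 h2.
  move=> z' e gz; have := Hg z'; rewrite gz => -[[u [c [fu [r ->]]]] _].
  have := hmin0 _ _ fu; rewrite h1 /M (dw _ _ r); lra.
move=> Hno; exfalso.
have Hsame : forall u1 u2, T u1 -> T u2 -> forall i,
    u1 (widen_ord (leqnSn n) i) = u2 (widen_ord (leqnSn n) i).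
  move=> u1 u2 T1 T2 i; apply: NNPP => ne; apply: Hno; exists u1, u2; split => //; split => //.
  by exists i.
have [sf Hsf] := Hfs f If.
have insf : forall u c, f u = Some c -> u \in sf.
  by move=> u c fu; apply/negPn/negP => /Hsf; rewrite fu.
pose K := 1 + \sum_(u <- sf) `|dotu u d|.
have HK : forall u c, f u = Some c -> `|dotu u d| < K.
  move=> u c fu; rewrite /K.
  have := @le_sum_seq R _ sf (fun v => `|dotu v d|) u (fun v => normr_ge0 _) (insf u c fu).
  move=> h; apply: (le_lt_trans h); by rewrite ltrDr.
have K0 : 0 < K by rewrite /K; apply: (lt_le_trans (ltr01)); rewrite lerDl sumr_ge0.
have [del [del0 Hdel]] := pos_lb sf (fun u => match f u with Some c => c + dotu u w - M | None => 0 end).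
pose t := Num.min 1 (del / (2 * K)).
have t0 : 0 < t by rewrite lt_min ltr01 divr_gt0 // mulr_gt0.
have t1 : t <= 1 by rewrite ge_min lexx.
have tK : t * K <= del / 2.
  have : t <= del / (2 * K) by rewrite ge_min lexx orbT.
  rewrite -(ler_pM2r K0) => h; apply: le_trans h _.
  have Kn : K != 0 by rewrite lt0r_neq0.
  have -> : del / (2 * K) * K = del / 2 by field; rewrite Kn.
  by [].
pose y := fun i => w i + t * d i.
have sy : s y.
  have := @poly_convex R _ s x w t (Hpoly s sS) sx sw; rewrite (ltW t0) t1; apply; by [].

have dy : forall u, dotu u y = dotu u w + t * dotu u d by move=> u; apply: dotu_lin.
have bnd : forall u c, f u = Some c -> - (t * K) < t * dotu u d < t * K.
  move=> u c fu; rewrite -ltr_norml normrM gtr0_norm // ltr_pM2l //; exact: HK fu.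
have inT : forall p cp, f p = Some cp -> cp + dotu p y <= c0 + dotu u0 y -> T p.
  move=> p cp fp hp; exists cp; split => //.
  have hge := hmin0 _ _ fp.
  apply: NNPP => hne.
  have hpos : 0 < cp + dotu p w - M by rewrite subr_gt0 lt_def; apply/andP; split => //; apply/eqP => E; apply: hne.
  have := Hdel p (insf p cp fp); rewrite fp => /(_ hpos) hd.
  have /andP [b1 b2] := bnd p cp fp; have /andP [b3 b4] := bnd u0 c0 fu0.
  move: hp hd tK del0 hge; rewrite !dy /M; lra.
have [p [q [cp [cq [neq [fp [fq [epq hminpq]]]]]]]] := VI y sy f If fnz.
have Tp : T p by apply: (inT p cp fp); apply: hminpq.
have Tq : T q by apply: (inT q cq fq); rewrite -epq; apply: hminpq.
move: (Tp) (Tq) => [cp' [fp' ep]] [cq' [fq' eq']].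
move: fp'; rewrite fp => -[?]; subst cp'.
move: fq'; rewrite fq => -[?]; subst cq'.
have hd : dotu p d = dotu q d.
  move: epq; rewrite !dy => h.
  apply: (mulfI (lt0r_neq0 t0)); move: h ep eq'; lra.
have same := Hsame p q Tp Tq.
have Ap : forall i, p (widen_ord (leqnSn n) i) = resu p i by move=> i; rewrite ffunE.
have Aq : forall i, q (widen_ord (leqnSn n) i) = resu p i by move=> i; rewrite ffunE same.
move: hd; rewrite (dotu_split _ Ap) (dotu_split _ Aq) => /addrI /(mulIf dn) /intr_inj pqn.
move/eqP: neq; apply; apply/ffunP => i.
case: (unliftP ord_max i) => [j ->|->] //.
have -> : lift ord_max j = widen_ord (leqnSn n) j by apply: val_inj; rewrite /= /bump leqNgt ltn_ord.
exact: same.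
Qed.

Unset Implicit Arguments.

Theorem proposition3p9 (R : realType) (n : nat) (I : tpoly R n.+1 -> Prop) (a : R) :
  tropical_ideal I ->
  (forall w' : pt R n, Vtrop (restr_ideal I a) w' ->
     exists w : pt R n.+1, Vtrop I w /\ w ord_max = a /\ forall i, proj w i = w' i) /\
  (forall (S : seq (pt R n.+1 -> Prop)) (s : pt R n.+1 -> Prop) (w : pt R n.+1),
     polyhedral_complex S -> (forall x, cx_support S x <-> Vtrop I x) ->
     List.In s S -> s w -> w ord_max = a ->
     ~ (forall v, dspan s v -> v ord_max = 0) ->
     Vtrop (restr_ideal I a) (proj w)) /\
  (forall w : pt R n.+1, w ord_max = a ->
     transverse (Vtrop I) (fun x : pt R n.+1 => x ord_max = a) w ->
     Vtrop (restr_ideal I a) (proj w)).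
Proof.
move=> [Hfs _].
split; first exact: part1.
split; first exact: part2.
move=> w wa [S1 [S2 [s1 [s2 [c1 [h1 [c2 [h2 [in1 [in2 [r1 [r2 span]]]]]]]]]]]].
apply: (part2 Hfs c1 h1 in1 (proj1 r1) wa) => H.
have [v1 [v2 [d1 [d2 eqv]]]] := span (fun i => if i == ord_max then 1 else 0).
have := eqv ord_max; rewrite eqxx (H v1 d1).
have -> : v2 ord_max = 0.
  by apply: (dspan_const (a := a)) d2 => y /(fun h => ex_intro _ s2 (conj in2 h)) /h2.
by rewrite addr0 => /eqP; rewrite oner_eq0.
Qed.
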